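(* Let $\mathcal{C}$ be a unital complex algebra, $A,B\subseteq\mathcal{C}$ subalgebras with $\mathbf{1}_{\mathcal{C}}\in B$, $\rho:A\to B$ and $\psi:B\to A$ linear maps, and $\mathfrak{e}:\mathcal{C}\to\mathcal{C}$ a linear map such that $(A,B)$ is right-liberated with respect to $(\mathfrak{e},\rho,\psi)$. Then for every $\ell\ge0$ and every $x=(b_0,a_1,b_1,\dots,a_\ell,b_\ell)\in\mathcal{W}_\ell$, \[ \mathfrak{e}\big[b_0a_1b_1\cdots a_\ell b_\ell\big]=\mathcal{M}(x)\,\mathfrak{e}[\mathbf{1}]. \]
   Context: $(A,B)$ is right-liberated with respect to $(\mathfrak e,\rho,\psi)$ if $\mathfrak e$ is a $B$-bimodule map ($\mathfrak e[b_1yb_2]=b_1\mathfrak e[y]b_2$ for $b_1,b_2\in B$, $y\in\mathcal C$) and for every $n\ge1$, $a_1,\dots,a_n\in A$, $b_1,\dots,b_{n-1}\in B$: $\mathfrak e\big[(a_1-\rho(a_1))(b_1-\psi(b_1))(a_2-\rho(a_2))\cdots(b_{n-1}-\psi(b_{n-1}))(a_n-\rho(a_n))\big]=0.$ Moment function: $\mathcal W_\ell$ is the set of tuples $(b_0,a_1,b_1,\dots,a_\ell,b_\ell)$ with $a_i\in A$, $b_i\in B$ (so $\mathcal W_0=B$). For $m\ge1$ let $[m]=\{1,\dots,m\}$, $2[m]=\{2,4,\dots,2m\}$, $2[0]=\emptyset$. For $\ell\ge1$ and $S\subseteq[2\ell-1]$, let $T_0,\dots,T_m$ be the maximal runs of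 consecutive integers in $S\cup\{0,2\ell\}$ and $U_1,\dots,U_m$ the maximal runs of consecutive integers in $[2\ell-1]\setminus S$, listed so that $T_0<U_1<T_1<\dots<U_m<T_m$; $m=:\mathrm{Alt}(S)$. For $w=(b_0,a_1,\dots,a_\ell,b_\ell)$ set, for $j\in S\cup\{0,2\ell\}$, $x_j=\rho(a_{(j+1)/2})$ if $j$ odd, $x_j=b_{j/2}$ if $j$ even; and for $k\in[2\ell-1]\setminus S$, $y_k=a_{(k+1)/2}$ if $k$ odd, $y_k=\psi(b_{k/2})$ if $k$ even. Define $\mathrm{Col}(w;S)=\big(\prod_{j\in T_0}x_j,\prod_{k\in U_1}y_k,\prod_{j\in T_1}x_j,\dots,\prod_{k\in U_m}y_k,\prod_{j\in T_m}x_j\big)\in\mathcal W_{m}$, products taken in increasing order of index. Define $\mathcal M:\bigcup_\ell\mathcal W_\ell\to B$ recursively by $\mathcal M(b)=b$ for $b\in\mathcal W_0$ and, for $x\in\mathcal W_\ell$, $\ell\ge1$, $\mathcal M(x)=\sum_{S\subseteq[2\ell-1],\,S\neq 2[\ell-1]}(-1)^{\ell+|S|}\mathcal M(\mathrm{Col}(x;S))$ (each such $S$ has $\mathrm{Alt}(S)<\ell$). *)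

(* Defs.v *)
From HB Require Import structures.
From mathcomp Require Import all_boot all_order all_algebra.
Set Implicit Arguments. Unset Strict Implicit. Unset Printing Implicit Defensive.
Import Order.TTheory GRing.Theory Num.Theory.
Local Open Scope ring_scope.

Section Defs.
Variables (K : numClosedFieldType) (C : algType K).

Definition is_subalgebra (S : {pred C}) : Prop :=
  [/\ 0 \in S,
      (forall (k : K) x y, x \in S -> y \in S -> k *: x + y \in S)
    & (forall x y, x \in S -> y \in S -> x * y \in S)].

Definition linear_map_on (S T : {pred C}) (f : C -> C) : Prop :=
  (forall x, x \in S -> f x \in T) /\
  (forall (k : K) x y, x \in S -> y \in S -> f (k *: x + y) = k *: f x + f y).

Definition is_linear (f : C -> C) : Prop :=
  forall (k : K) x y, f (k *: x + y) = k *: f x + f y.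

(* Right-liberation of (A,B) w.r.t. (e, rho, psi).  A tuple
   a_1, b_1, a_2, ..., b_{n-1}, a_n  (n >= 1) is represented by
   a1 together with the list [(b_1,a_2); ...; (b_{n-1},a_n)]. *)
Definition right_liberated (A B : {pred C}) (e rho psi : C -> C) : Prop :=
  (forall b1 b2 y, b1 \in B -> b2 \in B -> e (b1 * y * b2) = b1 * e y * b2) /\
  (forall (a1 : C) (s : seq (C * C)),
      a1 \in A -> all (fun p => (p.1 \in B) && (p.2 \in A)) s ->
      e ((a1 - rho a1) * \prod_(p <- s) ((p.1 - psi p.1) * (p.2 - rho p.2))) = 0).

(* A word (b_0, a_1, b_1, ..., a_l, b_l) in W_l is represented by
   (b_0, [(a_1,b_1); ...; (a_l,b_l)]); l = size x.2. *)
Definition word := (C * seq (C * C))%type.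

Definition flat (x : word) : seq C :=
  x.1 :: flatten [seq [:: p.1; p.2] | p <- x.2].

Fixpoint pairs (s : seq C) : seq (C * C) :=
  match s with
  | a :: b :: r => (a, b) :: pairs r
  | _ => [::]
  end.

Definition unflat (s : seq C) : word := (head 0 s, pairs (behead s)).

Fixpoint runs (s : seq (bool * C)) : seq (bool * C) :=
  match s with
  | [::] => [::]
  | (t, c) :: s' =>
      match runs s' with
      | (t', c') :: r => if t == t' then (t, c * c') :: r
                         else (t, c) :: (t', c') :: r
      | [::] => [:: (t, c)]
      end
  end.

(* Col(x;S): index j in [0,2l] is in T := S u {0,2l} (tag true) or in
   [2l-1] \ S (tag false); x_j / y_k as in the paper. *)
Definition Col (rho psi : C -> C) (x : word) (l : nat)
    (S : {set 'I_(2 * l).+1}) : word :=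
  let z := flat x in
  let inT (j : 'I_(2 * l).+1) :=
      (j \in S) || (val j == 0%N) || (val j == (2 * l)%N) in
  let v (j : 'I_(2 * l).+1) :=
      if inT j then (if odd j then rho (nth 0 z j) else nth 0 z j)
      else (if odd j then nth 0 z j else psi (nth 0 z j)) in
  unflat [seq c.2 | c <- runs [seq (inT j, v j) | j <- enum 'I_(2 * l).+1]].

Definition admissible (l : nat) (S : {set 'I_(2 * l).+1}) : bool :=
  [forall j : 'I_(2 * l).+1, (j \in S) ==> (0 < val j < 2 * l)%N] &&
  (S != [set j : 'I_(2 * l).+1 | (0 < val j < 2 * l)%N && ~~ odd j]).

Fixpoint Mfuel (rho psi : C -> C) (n : nat) (x : word) : C :=
  match n with
  | 0 => x.1
  | n'.+1 =>
      if x.2 is [::] then x.1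
      else \sum_(S : {set 'I_(2 * size x.2).+1} | admissible S)
             (-1) ^+ (size x.2 + #|S|) * Mfuel rho psi n' (Col rho psi x S)
  end.

Definition Moment (rho psi : C -> C) (x : word) : C :=
  Mfuel rho psi (size x.2) x.

End Defs.

(* Main.v *)
Require Import Defs.
From HB Require Import structures.
From mathcomp Require Import all_boot all_order all_algebra zify.
Set Implicit Arguments. Unset Strict Implicit. Unset Printing Implicit Defensive.
Import GRing.Theory.
Local Open Scope ring_scope.

Section Lists.
Variables (K : numClosedFieldType) (C : algType K) (A B : {pred C}).
Hypothesis mulA : forall x y, x \in A -> y \in A -> x * y \in A.
Hypothesis mulB : forall x y, x \in B -> y \in B -> x * y \in B.

Fixpoint alt (b : bool) (l : seq bool) : bool :=
  if l is t :: l' then (t == b) && alt (~~ b) l' else true.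

Fixpoint goodAB (b : bool) (l : seq C) : bool :=
  if l is c :: l' then (if b then c \in B else c \in A) && goodAB (~~ b) l' else true.

Definition tm (c : bool * C) := if c.1 then c.2 \in B else c.2 \in A.

Lemma runs_cons (s : seq (bool * C)) t (c : C) : runs ((t, c) :: s) =
  match runs s with
  | (t', c') :: r => if t == t' then (t, c * c') :: r else (t, c) :: (t', c') :: r
  | [::] => [:: (t, c)]
  end.
Proof. by []. Qed.

Lemma runs_alt (s : seq (bool * C)) t (c : C) : alt t (map fst (runs ((t, c) :: s))).
Proof.
elim: s t c => [|[t' c'] s IH] t c; first by rewrite /= eqxx.
rewrite runs_cons; have := IH t' c'.
case: (runs ((t', c') :: s)) => [|[t2 c2] r] //=; first by rewrite eqxx.
case/andP => /eqP -> H.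
case: eqP => [->|ne] /=; first by rewrite eqxx.
have Et : t' = ~~ t by move: ne; case: (t); case: (t') => //= /(_ erefl).
by move: H; rewrite Et negbK => H; rewrite !eqxx H.
Qed.

Lemma runs_last (s : seq (bool * C)) t (c : C) d : last d (map fst (runs ((t, c) :: s))) = last t (map fst s).
Proof.
elim: s t c d => [|[t' c'] s IH] t c d //.
rewrite runs_cons; have := IH t' c'.
case: (runs ((t', c') :: s)) => [|[t2 c2] r] /= H.
  by have := H true; rewrite -(H false).
by case: ifP => [/eqP ->|_] /=; rewrite (H t2).
Qed.

Lemma runs_prod (s : seq (bool * C)) : \prod_(c <- [seq c.2 | c <- runs s]) c = \prod_(c <- [seq c.2 | c <- s]) c.
Proof.
elim: s => [|[t c] s IH] //.
rewrite runs_cons [in RHS]map_cons big_cons -IH.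
case: (runs s) => [|[t2 c2] r]; first by rewrite /= !big_cons !big_nil.
by case: ifP => _; rewrite /= !big_cons ?mulrA.
Qed.

Lemma runs_tm (s : seq (bool * C)) : all tm s -> all tm (runs s).
Proof.
elim: s => [|[t c] s IH] //; rewrite runs_cons /= => /andP[tc /IH].
case: (runs s) => [|[t2 c2] r] /=; first by rewrite tc.
case/andP => tc2 Hr; case: ifP => [/eqP Et|_] /=; last by rewrite tc tc2 Hr.
by move: tc tc2; rewrite /tm /= -Et Hr andbT; case: t {Et} => /= ? ?; auto.
Qed.

Lemma runs_size (s : seq (bool * C)) : runs s = s \/ (size (runs s) < size s)%N.
Proof.
elim: s => [|[t c] s IH]; first by left.
rewrite runs_cons; case: IH => [E|lt].
  rewrite E; case: s E => [|[t2 c2] r] E /=; first by left.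
  by case: ifP => _; [right|left].
right; move: lt; case: (runs s) => [|[t2 c2] r] /=.
  by case: s.
by case: ifP => _ /=; lia.
Qed.

Lemma alt_good b (l : seq (bool * C)) : alt b (map fst l) -> all tm l -> goodAB b (map snd l).
Proof.
elim: l b => [|[t c] l IH] b //= /andP[/eqP Et H] /andP[tc H']; subst b.
by rewrite IH // andbT; move: tc; rewrite /tm /=.
Qed.

Lemma alt_nth b l j : alt b l -> (j < size l)%N -> nth false l j = b (+) odd j.
Proof.
elim: l b j => [|t l IH] b [|j] //= /andP[/eqP Et H] lt.
  by rewrite addbF.
by rewrite (IH _ _ H lt) addNb addbN.
Qed.

Lemma alt_last b l : alt b l -> last (~~ b) l = if odd (size l) then b else ~~ b.
Proof.
elim: l b => [|t l IH] b //= /andP[/eqP -> H].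
by move: (IH _ H); rewrite negbK => ->; case: (odd (size l)).
Qed.

Lemma goodAB_nth b l j : goodAB b l -> (j < size l)%N ->
  if b (+) odd j then nth 0 l j \in B else nth 0 l j \in A.
Proof.
elim: l b j => [|t l IH] b [|j] //= /andP[H1 H2] lt.
  by rewrite addbF.
by have := IH _ _ H2 lt; rewrite addNb addbN.
Qed.

Lemma pairs_ind (P : seq C -> Prop) : P [::] -> (forall a, P [:: a]) ->
  (forall a b l, P l -> P (a :: b :: l)) -> forall l, P l.
Proof.
move=> P0 P1 P2 l; have [n] := ubnP (size l); elim: n l => [|n IH] [|a [|b l]] //= lt.
by apply: P2; apply: IH; rewrite /= in lt; lia.
Qed.

Lemma pairs_good l : goodAB false l -> all (fun p => (p.1 \in A) && (p.2 \in B)) (pairs l).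
Proof.
elim/pairs_ind: l => //= a b l IH /andP[-> /andP[-> H]] /=; exact: IH.
Qed.

Lemma pairs_prod (l : seq C) : ~~ odd (size l) ->
  \prod_(p <- pairs l) (p.1 * p.2) = \prod_(c <- l) c.
Proof.
elim/pairs_ind: l => [|a|a b l IH] /=; [by rewrite !big_nil | by [] | ].
move=> H; rewrite !big_cons IH ?mulrA //; by rewrite negbK in H.
Qed.

Lemma pairs_size (l : seq C) : ((size (pairs l)).*2 <= size l)%N.
Proof. elim/pairs_ind: l => //= a b l IH; rewrite doubleS; lia. Qed.

End Lists.

Section Colsec.
Variables (K : numClosedFieldType) (C : algType K) (A B : {pred C}) (rho psi : C -> C).
Hypothesis mulA : forall x y, x \in A -> y \in A -> x * y \in A.
Hypothesis mulB : forall x y, x \in B -> y \in B -> x * y \in B.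
Hypothesis rhoAB : forall x, x \in A -> rho x \in B.
Hypothesis psiBA : forall x, x \in B -> psi x \in A.

Definition goodp (p : C * C) := (p.1 \in A) && (p.2 \in B).

Lemma flat_good (x : word C) : x.1 \in B -> all goodp x.2 -> goodAB A B true (flat x).
Proof.
case: x => b s /= -> /=; elim: s => [|[a b'] s IH] //= /andP[/andP[/= -> ->] /IH].
by [].
Qed.

Lemma flat_size (x : word C) : size (flat x) = (2 * size x.2).+1.
Proof.
case: x => b s; rewrite /flat /=; congr S.
elim: s => [|p s IH] //=; rewrite IH; lia.
Qed.

Lemma flat_prod (x : word C) : x.1 * \prod_(p <- x.2) (p.1 * p.2) =
   \prod_(j < (2 * size x.2).+1) nth 0 (flat x) j.
Proof.
rewrite -flat_size -(big_mkord xpredT (fun j => nth 0 (flat x) j)).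
rewrite -(@big_nth _ _ _ _ 0 (flat x) xpredT (fun c => c)).
case: x => b s; rewrite /flat /= big_cons; congr (_ * _).
elim: s => [|p s IH]; first by rewrite !big_nil.
by rewrite /= !big_cons IH mulrA.
Qed.

Definition ud (z : seq C) (j : nat) (c : bool) :=
  if c then (if odd j then rho (nth 0 z j) else nth 0 z j)
  else (if odd j then nth 0 z j else psi (nth 0 z j)).

Definition inTd (l : nat) (S : {set 'I_(2 * l).+1}) (j : 'I_(2 * l).+1) :=
  (j \in S) || (val j == 0%N) || (val j == (2 * l)%N).

Lemma Col_def (x : word C) l (S : {set 'I_(2 * l).+1}) : Col rho psi x S =
  unflat [seq c.2 | c <- runs [seq (inTd S j, ud (flat x) j (inTd S j)) | j <- enum 'I_(2 * l).+1]].
Proof. by []. Qed.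

Lemma ud_tm z j c : goodAB A B true z -> (j < size z)%N -> tm A B (c, ud z j c).
Proof.
move=> g lt; have := goodAB_nth g lt; rewrite /tm /ud /=.
by case: c; case: (odd j) => /=; auto.
Qed.

Lemma runs_abstract (tl : seq (bool * C)) c0 tl' :
  tl = (true, c0) :: tl' -> last true (map fst tl') -> all (tm A B) tl ->
  let y := unflat [seq c.2 | c <- runs tl] in
  [/\ y.1 \in B, all goodp y.2,
      y.1 * \prod_(p <- y.2) (p.1 * p.2) = \prod_(c <- [seq c.2 | c <- tl]) c
    & runs tl = tl \/ ((size y.2).*2.+2 <= size tl)%N].
Proof.
move=> Etl hl htm /=.
have ha := runs_alt tl' true c0.
have hl2 := runs_last tl' true c0 false.
have ht := runs_tm mulA mulB htm.
have hs := runs_size tl.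
have hp := runs_prod tl.
rewrite -Etl in ha hl2; rewrite hl in hl2.
move: ha hl2 ht hs hp; case: (runs tl) => [|[t1 h] rs] //=.
case/andP => /eqP -> ha hl2 /andP[th ht] hs hp.
have hal : alt true [seq i.1 | i <- (true, h) :: rs] by rewrite /= ha.
have := alt_last hal; rewrite /= hl2 size_map /=.
case Ho: (odd (size rs)) => //= _.
have gd := alt_good ha ht.
split.
- by [].
- exact: pairs_good gd.
- by rewrite pairs_prod ?size_map ?Ho // -hp big_cons.
- case: hs => [->|lt]; [by left|right].
  have := pairs_size [seq c.2 | c <- rs]; rewrite size_map /= in lt *; lia.
Qed.

Lemma Col_props (x : word C) (S : {set 'I_(2 * size x.2).+1}) :
  goodAB A B true (flat x) ->
  let y := Col rho psi x S in
  [/\ y.1 \in B, all goodp y.2,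
      y.1 * \prod_(p <- y.2) (p.1 * p.2) =
        \prod_(j < (2 * size x.2).+1) ud (flat x) j (inTd S j)
    & admissible S -> (size y.2 < size x.2)%N].
Proof.
move=> gz; rewrite Col_def.
set l := size x.2 in S *.
set tl := [seq _ | j <- enum 'I_(2 * l).+1].
have stl : size tl = (2 * l).+1 by rewrite size_map size_enum_ord.
have hn : forall d (j : 'I_(2 * l).+1), nth d (map fst tl) j = inTd S j.
  move=> d j; rewrite (nth_map (true, 0)) ?stl ?ltn_ord //.
  by rewrite (nth_map ord0) ?size_enum_ord ?ltn_ord // nth_ord_enum.
have [c0 [tl' Etl]] : exists c0 tl', tl = (true, c0) :: tl'.
  rewrite /tl enum_ordSl /= /inTd eqxx orbT /=; by do 2 eexists.
have hl : last true (map fst tl').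
  rewrite (last_nth true) -[true :: _]/(map fst ((true, c0) :: tl')) -Etl.
  have -> : size [seq i.1 | i <- tl'] = val (@ord_max (2 * l)).
    by rewrite size_map /=; move: stl; rewrite Etl /=; case.
  by rewrite hn /inTd /= eqxx !orbT.
have htm : all (tm A B) tl.
  apply/allP => c /mapP [j _ ->]; apply: ud_tm => //.
  by rewrite flat_size ltn_ord.
have [h1 h2 h3 h4] := runs_abstract Etl hl htm.
split => //.
  rewrite h3 big_map big_map -deprecated_filter_index_enum big_filter; by apply: eq_big.
move=> adm; case: h4 => [Er|]; last by rewrite stl; lia.
move: adm; rewrite /admissible => /andP[/forallP sub /eqP nS]; exfalso; apply: nS.
have ha := runs_alt tl' true c0; rewrite -Etl Er in ha.
have hj : forall j : 'I_(2 * l).+1, inTd S j = ~~ odd j.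
  move=> j; rewrite -(hn false) (alt_nth ha) //; by rewrite size_map stl ltn_ord.
apply/setP => j; rewrite inE; have := hj j; have := sub j; rewrite /inTd.
have jle := ltn_ord j.
have E : ((nat_of_ord j == 0%N) || (nat_of_ord j == 2 * l)%N) = ~~ (0 < j < 2 * l)%N.
  by apply/idP/idP; [case/orP => /eqP H; apply/negP; lia | move=> H; apply/orP; lia].
case: (j \in S) => /=.
  by move=> -> <-.
by move=> _; rewrite E ; case: (0 < j < 2 * l)%N => //= <-.
Qed.

End Colsec.

Lemma prod_pairs (K : numClosedFieldType) (C : algType K) (f : nat -> C) m :
  \prod_(0 <= j < 2 * m) f j = \prod_(0 <= i < m) (f (2 * i)%N * f (2 * i).+1).
Proof.
elim: m => [|m IH]; first by rewrite !big_geq.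
rewrite mulnS add2n !big_nat_recr //= -?IH ?mulrA //; lia.
Qed.

Section Core.
Variables (K : numClosedFieldType) (C : algType K) (A B : {pred C}) (rho psi e : C -> C).
Hypothesis hA : is_subalgebra A.
Hypothesis hB : is_subalgebra B.
Hypothesis h1B : 1 \in B.
Hypothesis hrho : linear_map_on A B rho.
Hypothesis hpsi : linear_map_on B A psi.
Hypothesis he : is_linear e.
Hypothesis hlib : right_liberated A B e rho psi.

Lemma e0 : e 0 = 0.
Proof.
have h := he 1 0 0; rewrite scaler0 scale1r !addr0 in h.
by apply: (addrI (e 0)); rewrite addr0 -h.
Qed.

Lemma eD x y : e (x + y) = e x + e y.
Proof. by have := he 1 x y; rewrite !scale1r. Qed.

Lemma eN x : e (- x) = - e x.
Proof. by have := he (-1) x 0; rewrite !scaleN1r addr0 e0 addr0. Qed.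

Lemma e_sum (I : Type) (r : seq I) (P : pred I) (F : I -> C) :
  e (\sum_(i <- r | P i) F i) = \sum_(i <- r | P i) e (F i).
Proof. exact: (big_morph e eD e0). Qed.

Lemma e_sign k x : e ((-1) ^+ k * x) = (-1) ^+ k * e x.
Proof.
rewrite -signr_odd; case: (odd k); rewrite ?expr0 ?mul1r //.
by rewrite expr1 !mulN1r eN.
Qed.

Lemma e_bimod b1 y b2 : b1 \in B -> b2 \in B -> e (b1 * y * b2) = b1 * e y * b2.
Proof. by case: hlib => H _; apply: H. Qed.

Lemma mulA' x y : x \in A -> y \in A -> x * y \in A.
Proof. by case: hA => _ _; apply. Qed.
Lemma mulB' x y : x \in B -> y \in B -> x * y \in B.
Proof. by case: hB => _ _; apply. Qed.
Lemma rhoAB x : x \in A -> rho x \in B.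
Proof. by case: hrho => H _; apply: H. Qed.
Lemma psiBA x : x \in B -> psi x \in A.
Proof. by case: hpsi => H _; apply: H. Qed.

Section Z.
Variables (m : nat) (z : seq C).
Hypothesis sz : size z = (2 * m.+1).+1.
Hypothesis gz : goodAB A B true z.

Definition Dv (j : nat) :=
  if (0 < j < 2 * m.+1)%N then
    (if odd j then nth 0 z j - rho (nth 0 z j) else nth 0 z j - psi (nth 0 z j))
  else nth 0 z j.

Lemma zmem j : (j < (2 * m.+1).+1)%N ->
  if odd j then nth 0 z j \in A else nth 0 z j \in B.
Proof. by rewrite -sz => /(goodAB_nth gz); case: (odd j). Qed.

Lemma Dv_zero : e (\prod_(j < (2 * m.+1).+1) Dv j) = 0.
Proof.
rewrite -(big_mkord xpredT) (_ : (2 * m.+1 = (2 * m).+2)%N); last lia.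
rewrite big_nat_recl // big_nat_recr // big_nat_recl // prod_pairs.
set s := [seq (nth 0 z (2 * i).+2, nth 0 z (2 * i).+3) | i <- iota 0 m].
have -> : \prod_(0 <= i < m) (Dv (2 * i).+2 * Dv (2 * i).+3) =
    \prod_(p <- s) ((p.1 - psi p.1) * (p.2 - rho p.2)).
  rewrite big_map (_ : iota 0 m = index_iota 0 m); last by rewrite /index_iota subn0.
  apply: eq_big_nat => i lti.
  rewrite /Dv /= oddM /= !ifT //; lia.
rewrite (_ : Dv 0 = nth 0 z 0) // (_ : Dv (2 * m).+2 = nth 0 z (2 * m).+2); last first.
  by rewrite /Dv ifF //; lia.
rewrite (_ : Dv 1 = nth 0 z 1 - rho (nth 0 z 1)); last by rewrite /Dv ifT //; lia.
rewrite mulrA e_bimod.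
- case: hlib => _ H; rewrite H ?mulr0 ?mul0r //.
  + by have := @zmem 1; rewrite /=; apply; lia.
  + apply/allP => p /mapP [i]; rewrite mem_iota => /andP[_ lti] ->.
    have h2 := (@zmem (2 * i).+2); have h3 := (@zmem (2 * i).+3).
    rewrite /= oddM /= in h2 h3; rewrite h2 ?h3 //; lia.
- by have := @zmem 0; rewrite /=; apply; lia.
- have := @zmem (2 * m).+2; rewrite /= oddM /=; apply; lia.
Qed.

Definition intn (j : nat) := (0 < j < 2 * m.+1)%N.
Definition sgn (j : nat) (c : bool) : nat := intn j && (odd j == c).
Definition Fc (j : nat) (c : bool) := (-1) ^+ sgn j c * ud rho psi z j c.

Lemma nonint j : (j < (2 * m.+1).+1)%N -> ~~ intn j = (j == 0%N) || (j == 2 * m.+1)%N.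
Proof.
move=> lt; rewrite /intn; apply/idP/idP.
  by move=> H; apply/orP; lia.
by case/orP => /eqP H; apply/negP; lia.
Qed.

Lemma nonint_even j : (j < (2 * m.+1).+1)%N -> ~~ intn j -> ~~ odd j.
Proof.
move=> lt; rewrite nonint // => /orP[/eqP -> //|/eqP ->].
by rewrite oddM.
Qed.

Lemma ne0 (j : nat) : (0 < j < 2 * m.+1)%N -> (j == 0%N) = false.
Proof. by case/andP => h _; apply/negbTE; rewrite -lt0n. Qed.

Lemma ne2 (j : nat) : (0 < j < 2 * m.+1)%N -> (j == 2 * m.+1)%N = false.
Proof. by case/andP => _ h; apply/negbTE; rewrite neq_ltn h. Qed.

Lemma Dv_sum j : (j < (2 * m.+1).+1)%N -> Dv j = \sum_(c : bool | intn j || c) Fc j c.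
Proof.
move=> lt; rewrite big_mkcond big_bool /= /Fc /sgn /Dv /ud -/(intn j).
case hi: (intn j) => /=.
  case: (odd j) => /=; rewrite ?expr0 ?expr1 ?mul1r ?mulN1r //.
  by rewrite addrC.
have := nonint_even lt; rewrite hi => /(_ isT) /negbTE ->.
by rewrite expr0 mul1r addr0.
Qed.

Definition subint (S : {set 'I_(2 * m.+1).+1}) :=
  [forall j : 'I_(2 * m.+1).+1, (j \in S) ==> (0 < val j < 2 * m.+1)%N].

Lemma expand : \prod_(j < (2 * m.+1).+1) Dv j =
  \sum_(S : {set 'I_(2 * m.+1).+1} | subint S) \prod_(j < (2 * m.+1).+1) Fc j (inTd S j).
Proof.
rewrite (eq_bigr (fun j : 'I_(2 * m.+1).+1 => \sum_(c | intn j || c) Fc j c)); last first.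
  by move=> j _; apply: Dv_sum; exact: ltn_ord.
rewrite (big_distr_big_dep true).
pose h (f : {ffun 'I_(2 * m.+1).+1 -> bool}) := [set j | f j && intn j].
pose h' (S : {set 'I_(2 * m.+1).+1}) := [ffun j => inTd S j].
have f2 : forall (f : {ffun 'I_(2 * m.+1).+1 -> bool}) (j : 'I_(2 * m.+1).+1), [forall j : 'I_(2 * m.+1).+1, intn j || f j] -> inTd (h f) j = f j.
  move=> f j /forallP /(_ j); rewrite /inTd inE.
  case hi: (intn j) => /=.
    move: hi; rewrite /intn => hi _; rewrite andbT.
    by rewrite (ne0 hi) (ne2 hi) !orbF.
  move=> ->; have := nonint (ltn_ord j); rewrite hi /= => <-.
  by [].

have f1 : forall (f : {ffun 'I_(2 * m.+1).+1 -> bool}), (f \in pfamily true predT (fun j : 'I_(2 * m.+1).+1 => [pred c | intn j || c])) =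
    [forall j : 'I_(2 * m.+1).+1, intn j || f j].
  move=> f; apply/familyP/forallP => H j; have := H j; by rewrite /= ?inE.
have f3 : forall (f : {ffun 'I_(2 * m.+1).+1 -> bool}), (h' (h f) == f) = [forall j : 'I_(2 * m.+1).+1, intn j || f j].
  move=> f; apply/eqP/idP => [E|H].
    apply/forallP => j; case hi: (intn j) => //=.
    rewrite -E ffunE /inTd inE.
    by rewrite -orbA; have := nonint (ltn_ord j); rewrite hi /= => <-; rewrite orbT.
  by apply/ffunP => j; rewrite ffunE f2.
symmetry; rewrite (reindex_onto h h'); last first.
  move=> S /forallP sub; apply/setP => j; rewrite inE ffunE /inTd.
  have := sub j; case: (j \in S) => /=.
    by move=> H; rewrite /intn H.
  by move=> _; rewrite -(nonint (ltn_ord j)) andNb.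
apply: eq_big => [f|f].
  rewrite f1 f3 andbC; case: [forall j : 'I_(2 * m.+1).+1, intn j || f j] => //=.
  by apply/forallP => j; apply/implyP; rewrite inE => /andP[_].
move=> /andP[_]; rewrite f3 => H; apply: eq_bigr => j _; by rewrite f2.
Qed.

Lemma prod_sign k (a : 'I_k -> nat) (w : 'I_k -> C) :
  \prod_(i < k) ((-1) ^+ a i * w i) = (-1) ^+ (\sum_(i < k) a i) * \prod_(i < k) w i.
Proof.
elim: k a w => [|k IH] a w; first by rewrite !big_ord0 expr0 mul1r.
rewrite !big_ord_recr /= IH exprD -!mulrA; congr (_ * _).
by rewrite !mulrA (commr_sign (\prod_(i < k) w (widen_ord (leqnSn k) i))).
Qed.

Lemma sum_odd : \sum_(j < (2 * m.+1).+1) (odd j : nat) = m.+1.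
Proof.
rewrite -(big_mkord xpredT (fun j => (odd j : nat))).
elim: m.+1 => [|l IH]; first by rewrite muln0 big_nat1.
rewrite mulnS add2n big_nat_recr // big_nat_recr // IH.
change (l + odd (2 * l).+1 + odd (2 * l).+2 = l.+1)%N.
have o1 : odd (2 * l).+1 = true by rewrite -addn1 oddD oddM.
have o2 : odd (2 * l).+2 = false by rewrite -addn2 oddD oddM.
by rewrite o1 o2 /= addn0 addn1.
Qed.

Lemma sum_int : \sum_(j < (2 * m.+1).+1) (intn j : nat) = (2 * m).+1.
Proof.
rewrite -(big_mkord xpredT (fun j => (intn j : nat))).
rewrite big_nat_recr //.
change (\sum_(0 <= i < 2 * m.+1) (intn i : nat) + intn (2 * m.+1) = (2 * m).+1)%N.
rewrite {2}/intn ltnn andbF addn0.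
rewrite (_ : (2 * m.+1 = (2 * m).+1.+1)%N); last lia.
rewrite big_nat_recl // {1}/intn /= add0n.
rewrite (eq_big_nat _ _ (F2 := fun _ => 1%N)); last first.
  by move=> i lti; rewrite /intn; apply/eqP; rewrite eqb1; apply/andP; split; lia.
by rewrite sum_nat_const_nat subn0 muln1.
Qed.

Lemma sum_S (S : {set 'I_(2 * m.+1).+1}) : \sum_(j < (2 * m.+1).+1) ((j \in S) : nat) = #|S|.
Proof. by rewrite -sum1_card [RHS]big_mkcond; apply: eq_bigr => j _; case: (j \in S). Qed.

Lemma sgn_parity (S : {set 'I_(2 * m.+1).+1}) : subint S ->
  odd (\sum_(j < (2 * m.+1).+1) sgn j (inTd S j)) = ~~ odd (m.+1 + #|S|).
Proof.
move=> /forallP sub.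
have key : forall j : 'I_(2 * m.+1).+1,
  (sgn j (inTd S j) + ((odd j : nat) + ((j \in S) : nat)) =
   (intn j : nat) + 2 * ((odd j && (j \in S)) : nat))%N.
  move=> j; have := sub j; rewrite /sgn /inTd.
  case hi: (intn j).
    move: (hi); rewrite /intn => hi' _.
    rewrite (ne0 hi') (ne2 hi') !orbF.
    by case: (odd j); case: (j \in S).
  rewrite /intn in hi; rewrite hi implybF => /negbTE ->.
  have := nonint_even (ltn_ord j); rewrite /intn hi => /(_ isT) /negbTE -> /=.
  done.
have := @eq_bigr nat 0%N addn 'I_(2 * m.+1).+1 (index_enum _) xpredT _ _ (fun j (_ : true) => key j).
rewrite !big_split /= sum_odd sum_S sum_int big1_eq.
set X := \sum_(j < _) sgn _ _; set Y := \sum_(j < _) (odd _ && _ : nat).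
set k := (m + #|S|)%N.
move=> H; have H' : (X + k.+1 = (2 * (m + Y)).+1)%N by rewrite /k; lia.
rewrite ?addSn -/k.
have := congr1 odd H'; rewrite oddD /= oddM /=.
by case: (odd X); case: (odd k).
Qed.

Definition S0 : {set 'I_(2 * m.+1).+1} :=
  [set j : 'I_(2 * m.+1).+1 | (0 < val j < 2 * m.+1)%N && ~~ odd j].

Lemma inTd_S0 (j : 'I_(2 * m.+1).+1) : inTd S0 j = ~~ odd j.
Proof.
rewrite /inTd inE.
case hi: (0 < val j < 2 * m.+1)%N => /=.
  by rewrite (ne0 hi) (ne2 hi) !orbF.
have := nonint_even (ltn_ord j); rewrite /intn hi => /(_ isT) -> .
by have := nonint (ltn_ord j); rewrite /intn hi /= => <-.
Qed.

Lemma core : e (\prod_(j < (2 * m.+1).+1) nth 0 z j) =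
  \sum_(S : {set 'I_(2 * m.+1).+1} | admissible S)
     (-1) ^+ (m.+1 + #|S|) * e (\prod_(j < (2 * m.+1).+1) ud rho psi z j (inTd S j)).
Proof.
have H0 := Dv_zero; rewrite expand e_sum (bigD1 S0) /= in H0; last first.
  by apply/forallP => j; apply/implyP; rewrite inE => /andP[].
have E0 : \prod_(j < (2 * m.+1).+1) Fc j (inTd S0 j) = \prod_(j < (2 * m.+1).+1) nth 0 z j.
  apply: eq_bigr => j _; rewrite /Fc /sgn inTd_S0 /ud.
  case: (odd j) => /=; by rewrite andbF expr0 mul1r.
rewrite E0 in H0.
have -> : e (\prod_(j < (2 * m.+1).+1) nth 0 z j) =
   - \sum_(S | subint S && (S != S0)) e (\prod_(j < (2 * m.+1).+1) Fc j (inTd S j)).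
  by apply/eqP; rewrite -addr_eq0 H0.
rewrite -sumrN; apply: eq_big => [S|S].
  by [].
case/andP => sub _.
rewrite /Fc (prod_sign (fun j : 'I_(2 * m.+1).+1 => sgn j (inTd S j))
   (fun j : 'I_(2 * m.+1).+1 => ud rho psi z j (inTd S j))) e_sign.
rewrite -signr_odd sgn_parity // -(signr_odd _ (m.+1 + #|S|)).
by case: (odd _); rewrite /= ?expr0 ?expr1 ?mulN1r ?mul1r ?opprK.
Qed.

End Z.

Lemma main_fuel N (x : word C) : (size x.2 <= N)%N -> x.1 \in B ->
  all (fun p => (p.1 \in A) && (p.2 \in B)) x.2 ->
  e (x.1 * \prod_(p <- x.2) (p.1 * p.2)) = Mfuel rho psi N x * e 1.
Proof.
have base : forall b, b \in B -> e (b * \prod_(p <- [::]) (p.1 * p.2)) = b * e 1.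
  by move=> b hb; rewrite big_nil -(mulr1 (b * 1)) e_bimod // ?mulr1.
elim: N x => [|N IH] [b0 [|p s]] //= hs hb hg; try by rewrite base.
have gz : goodAB A B true (flat (b0, p :: s)) by apply: flat_good.
have sz : size (flat (b0, p :: s)) = (2 * (size s).+1).+1 by rewrite flat_size.
rewrite (flat_prod (b0, p :: s)) /= (core sz gz) mulr_suml.
apply: eq_bigr => S adm.
have [h1 h2 h3 h4] := @Col_props _ _ _ _ _ _ mulA' mulB' rhoAB psiBA (b0, p :: s) S gz.
rewrite -h3 IH // -?mulrA //.
by have := h4 adm; rewrite /=; lia.
Qed.

End Core.

Unset Implicit Arguments.

Theorem theorem2p6 (K : numClosedFieldType) (C : algType K)
    (A B : {pred C}) (rho psi e : C -> C) :
  is_subalgebra A -> is_subalgebra B -> 1 \in B ->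
  linear_map_on A B rho -> linear_map_on B A psi -> is_linear e ->
  right_liberated A B e rho psi ->
  forall x : word C,
    x.1 \in B -> all (fun p => (p.1 \in A) && (p.2 \in B)) x.2 ->
    e (x.1 * \prod_(p <- x.2) (p.1 * p.2)) = Moment rho psi x * e 1.
Proof.
move=> hA hB h1B hrho hpsi he hlib x hb hg.
exact: (main_fuel hA hB h1B hrho hpsi he hlib (leqnn _) hb hg).
Qed.
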